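(* The reward-design problem (maximize $\sum_{i=1}^n x_i^*$ over feasible $(f,x_1^*,\dots,x_n^* )$) has the same optimal value as the linear program \[\begin{aligned}\text{maximize}\ & \sum_{i=1}^n x_i^*\\ \text{subject to}\ & 0\le x_i^*\le q_i,\quad i=1,\dots,n,\\ & 0\le x_1^*\le x_2^*\le\cdots\le x_n^*,\\ & C\left(\frac{x_n^*}{q_n}+\sum_{i=1}^{n-1}\left((n-i)\left(\frac{1}{q_i}-\frac{1}{q_{i+1}}\right)+\frac{1}{q_i}\right)x_i^*\right)\le B.\end{aligned}\] Moreover, if $(x_1^*,\dots,x_n^* )$ is an optimal solution of this linear program, then $(f,x_1^*,\dots,x_n^* )$ is an optimal solution of the reward-design problem, where $f(x)=0$ for $0\le x<x_1^*$ and, for $x_j^*\le x<x_{j+1}^*$ ($1\le j\le n$, $x_{n+1}^*=+\infty$), $f(x)=C\left(\sum_{t=1}^{j-1}\left(\frac{x_t^*}{q_t}-\frac{x_t^*}{q_{t+1}}\right)+\frac{x_j^*}{q_j}\right)$.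
   Context: There are $n$ agents with types $0<q_1\le q_2\le\cdots\le q_n$, a cost constant $C>0$ and a budget $B>0$. A reward function is a map $f:[0,\infty)\to[0,\infty)$; agent $i$'s utility for producing quality $x$ is $u_i(x)=f(x)-xC/q_i$. A tuple $(f,x_1^*,\dots,x_n^* )$ is feasible for the reward-design problem if for each $i$: $0\le x_i^*\le q_i$ and $u_i(x_i^* )\ge u_i(x)$ for all $x\in[0,q_i]$, and $\sum_{i=1}^n f(x_i^* )\le B$. The reward-design problem is to maximize $\sum_{i=1}^n x_i^*$ over feasible tuples. *)

(* Defs.v *)
(* R : realType. Agents are indexed 1..n (as in the paper);
   sequences are functions nat -> R, only indices 1..n matter. *)
From mathcomp Require Import all_boot all_order all_algebra.
From mathcomp Require Import reals.
Set Implicit Arguments. Unset Strict Implicit. Unset Printing Implicit Defensive.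
Import Order.TTheory GRing.Theory Num.Theory.
Local Open Scope ring_scope.

Section Defs.
Variable R : realType.

Definition utility (C qi : R) (f : R -> R) (x : R) : R := f x - x * C / qi.

(* f is a reward function [0,oo) -> [0,oo) (values on negatives irrelevant) *)
Definition reward_fun (f : R -> R) : Prop := forall t, 0 <= t -> 0 <= f t.

Definition RD_feasible (n : nat) (q : nat -> R) (C B : R)
  (f : R -> R) (x : nat -> R) : Prop :=
  reward_fun f /\
  (forall i, (1 <= i <= n)%N ->
     (0 <= x i /\ x i <= q i) /\
     (forall y, 0 <= y -> y <= q i -> utility C (q i) f y <= utility C (q i) f (x i))) /\
  \sum_(1 <= i < n.+1) f (x i) <= B.

Definition sum_quality (n : nat) (x : nat -> R) : R := \sum_(1 <= i < n.+1) x i.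

Definition LP_feasible (n : nat) (q : nat -> R) (C B : R) (x : nat -> R) : Prop :=
  (forall i, (1 <= i <= n)%N -> 0 <= x i /\ x i <= q i) /\
  0 <= x 1%N /\
  (forall i, (1 <= i < n)%N -> x i <= x i.+1) /\
  C * (x n / q n +
       \sum_(1 <= i < n) (((n - i)%:R * (1 / q i - 1 / q i.+1) + 1 / q i) * x i))
    <= B.

Definition LP_optimal (n : nat) (q : nat -> R) (C B : R) (x : nat -> R) : Prop :=
  LP_feasible n q C B x /\
  forall y, LP_feasible n q C B y -> sum_quality n y <= sum_quality n x.

(* The relevant j is the largest j in 1..n with x_j <= t (0 if none). *)
Definition opt_reward (n : nat) (q : nat -> R) (C : R) (x : nat -> R) (t : R) : R :=
  let j := \big[maxn/0%N]_(1 <= k < n.+1 | (x k <= t)%R) k in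
  if j == 0%N then 0
  else C * (\sum_(1 <= s < j) (x s / q s - x s / q s.+1) + x j / q j).

End Defs.

(* Main.v *)
Require Import Defs.
From mathcomp Require Import all_boot all_order all_algebra.
From mathcomp Require Import reals.
From mathcomp Require Import all_classical all_reals all_analysis.
From mathcomp Require Import zify ring lra.
Import Order.TTheory GRing.Theory Num.Theory.
Import numFieldNormedType.Exports.
Local Open Scope ring_scope.

Section Common.
Variable R : realType.

Lemma sum_ge0_nat (a b : nat) (F : nat -> R) :
  (forall i, (a <= i < b)%N -> 0 <= F i) -> 0 <= \sum_(a <= i < b) F i.
Proof.
move=> H; rewrite big_nat_cond; apply: sumr_ge0 => i /andP[hi _]; exact: H.
Qed.

Lemma chain_up (g : nat -> R) a b :
  (forall j, (a <= j < b)%N -> g j <= g j.+1) ->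
  forall j, (a <= j <= b)%N -> g j <= g b.
Proof.
elim: b => [|b IH] H j hj.
  by have -> : j = 0%N by lia.
have [->|hjb] := eqVneq j b.+1; first exact: lexx.
apply: le_trans (IH _ j _) (H b _); try lia.
by move=> k hk; apply: H; lia.
Qed.

Lemma chain_down (g : nat -> R) a b :
  (forall j, (a <= j < b)%N -> g j.+1 <= g j) ->
  forall j, (a <= j <= b)%N -> g j <= g a.
Proof.
move=> H; elim=> [|j IH] hj.
  by have -> : a = 0%N by lia.
have [->|hja] := eqVneq a j.+1; first exact: lexx.
apply: le_trans (H j _) (IH _); lia.
Qed.

Lemma exch (a : nat -> R) m :
  \sum_(1 <= i < m.+1) \sum_(1 <= s < i) a s =
  \sum_(1 <= s < m) (m - s)%:R * a s.
Proof.
elim: m => [|m IH]; first by rewrite !big_geq.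
rewrite big_nat_recr //= IH.
case: m IH => [|m] IH; first by rewrite !big_geq ?addr0.
rewrite [RHS]big_nat_recr //= [X in _ + X = _]big_nat_recr //= subSnn mul1r.
rewrite addrA; congr (_ + _).
rewrite -big_split /=; apply: eq_big_nat => s hs.
have -> : (m.+2 - s)%N = ((m.+1 - s) + 1)%N by lia.
by rewrite natrD mulrDl mul1r.
Qed.

End Common.

Section QFacts.
Variables (R : realType) (n : nat) (q : nat -> R).
Hypothesis hq1 : 0 < q 1%N.
Hypothesis hq : forall i, (1 <= i < n)%N -> q i <= q i.+1.

Lemma qmono i j : (1 <= i)%N -> (i <= j)%N -> (j <= n)%N -> q i <= q j.
Proof.
move=> h1; elim: j => [|j IH] hij hjn; first lia.
have [->|hne] := eqVneq i j.+1; first exact: lexx.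
apply: le_trans (IH _ _) (hq _ _); lia.
Qed.

Lemma qpos i : (1 <= i <= n)%N -> 0 < q i.
Proof.
move=> /andP[h1 h2]; apply: (lt_le_trans hq1); exact: qmono.
Qed.

Lemma invq_anti i j : (1 <= i)%N -> (i <= j)%N -> (j <= n)%N -> (q j)^-1 <= (q i)^-1.
Proof.
move=> h1 h2 h3.
have hi : 0 < q i by apply: qpos; lia.
have hj : 0 < q j by apply: qpos; lia.
by rewrite lef_pV2 ?posrE // qmono.
Qed.

Lemma costE (C : R) (w : nat -> R) : (0 < n)%N ->
  C * (w n / q n +
       \sum_(1 <= i < n) (((n - i)%:R * (1 / q i - 1 / q i.+1) + 1 / q i) * w i))
  = C * \sum_(1 <= i < n.+1) w i / q i +
    C * \sum_(1 <= i < n) (n - i)%:R * (w i * ((q i)^-1 - (q i.+1)^-1)).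
Proof.
move=> hn; rewrite -mulrDr; congr (_ * _).
rewrite big_nat_recr //= addrC -addrA; congr (_ + _).
rewrite addrC -big_split /=; apply: eq_big_nat => i hi; rewrite /=. ring.
Qed.

End QFacts.
Section PartA.
Variables (R : realType) (n : nat) (q : nat -> R) (C B : R).
Hypothesis hn : (0 < n)%N.
Hypothesis hq1 : 0 < q 1%N.
Hypothesis hq : forall i, (1 <= i < n)%N -> q i <= q i.+1.
Hypothesis hC : 0 < C.
Variable x : nat -> R.
Hypothesis hx : LP_feasible n q C B x.

Let hxb : forall i, (1 <= i <= n)%N -> 0 <= x i /\ x i <= q i.
Proof. by case: hx. Qed.
Let hxm : forall i, (1 <= i < n)%N -> x i <= x i.+1.
Proof. by case: hx => _ [_ []]. Qed.
Let hxB : C * (x n / q n +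
       \sum_(1 <= i < n) (((n - i)%:R * (1 / q i - 1 / q i.+1) + 1 / q i) * x i))
    <= B.
Proof. by case: hx => _ [_ []]. Qed.

Lemma xmono i j : (1 <= i)%N -> (i <= j)%N -> (j <= n)%N -> x i <= x j.
Proof.
move=> h1; elim: j => [|j IH] hij hjn; first lia.
have [->|hne] := eqVneq i j.+1; first exact: lexx.
apply: le_trans (IH _ _) (hxm _ _); lia.
Qed.

Definition Fv (j : nat) : R :=
  C * (\sum_(1 <= s < j) (x s / q s - x s / q s.+1) + x j / q j).

Definition Jv (t : R) : nat := \big[maxn/0%N]_(1 <= k < n.+1 | (x k <= t)%R) k.

Lemma ORE t : opt_reward n q C x t = if Jv t == 0%N then 0 else Fv (Jv t).
Proof. by []. Qed.

Lemma J_spec t : (Jv t <= n)%N /\ (Jv t = 0%N \/ (1 <= Jv t)%N /\ x (Jv t) <= t).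
Proof.
rewrite /Jv big_nat_cond.
apply: (big_ind (fun j => (j <= n)%N /\ (j = 0%N \/ (1 <= j)%N /\ x j <= t))).
- by split => //; left.
- move=> a b [ha1 ha2] [hb1 hb2]; rewrite /maxn; case: ifP => _; by split.
- move=> i /andP[/andP[h1 h2] h3]; split; first lia.
  by right; split.
Qed.

Lemma J_ge t k : (1 <= k <= n)%N -> x k <= t -> (k <= Jv t)%N.
Proof.
move=> hk hxt; rewrite /Jv.
apply: (@leq_bigmax_seq _ _ _ id k) => //.
by rewrite mem_index_iota; lia.
Qed.

Lemma FS j : (0 < j)%N -> Fv j.+1 - Fv j = C * (x j.+1 - x j) / q j.+1.
Proof.
move=> hj; rewrite /Fv big_nat_recr //=. ring.
Qed.

Lemma Fconst i j : (1 <= i)%N -> (i <= j)%N -> (j <= n)%N -> x i = x j -> Fv i = Fv j.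
Proof.
move=> h1; elim: j => [|j IH] hij hjn; first lia.
have [->|hne] := eqVneq i j.+1; first by [].
move=> he.
have hj : x j = x i.
  apply/eqP; rewrite eq_le; apply/andP; split.
    rewrite he; apply: hxm; lia.
  apply: xmono; lia.
rewrite (IH _ _ (esym hj)); try lia.
apply/eqP; rewrite eq_sym -subr_eq0 FS; last lia.
by rewrite -he hj subrr mulr0 mul0r.
Qed.

Lemma fxi i : (1 <= i <= n)%N -> opt_reward n q C x (x i) = Fv i.
Proof.
move=> hi; rewrite ORE.
have hij := @J_ge (x i) i hi (lexx _).
have [hJn [hJ0|[hJ1 hJx]]] := J_spec (x i).
  rewrite hJ0 in hij; lia.
have -> : (Jv (x i) == 0%N) = false by apply/eqP; lia.
apply/esym/Fconst; try lia.
apply/eqP; rewrite eq_le hJx andbT xmono //; lia.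
Qed.

Lemma F_lb j : (1 <= j <= n)%N -> x j * C / q j <= Fv j.
Proof.
move=> hj; rewrite /Fv mulrDr.
have -> : x j * C / q j = C * (x j / q j) by ring.
rewrite lerDr; apply: mulr_ge0; first exact: ltW.
apply: sum_ge0_nat => s hs.
have -> : x s / q s - x s / q s.+1 = x s * ((q s)^-1 - (q s.+1)^-1) by ring.
apply: mulr_ge0; first by case: (hxb s _) => //; lia.
rewrite subr_ge0; apply: (@invq_anti R n q hq1 hq); lia.
Qed.

Lemma F_ge0 j : (1 <= j <= n)%N -> 0 <= Fv j.
Proof.
move=> hj; apply: le_trans (F_lb _ hj).
have [h0 _] := hxb _ hj.
apply: mulr_ge0; [apply: mulr_ge0 => //; exact: ltW|].
by rewrite invr_ge0 ltW // (@qpos R n q hq1 hq).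
Qed.

Lemma D_step_up i j : (1 <= j)%N -> (j < i)%N -> (i <= n)%N ->
  Fv j - x j * C / q i <= Fv j.+1 - x j.+1 * C / q i.
Proof.
move=> h1 h2 h3; rewrite -subr_ge0.
have -> : Fv j.+1 - x j.+1 * C / q i - (Fv j - x j * C / q i) =
  (Fv j.+1 - Fv j) - (x j.+1 - x j) * C / q i by ring.
rewrite FS //.
have -> : C * (x j.+1 - x j) / q j.+1 - (x j.+1 - x j) * C / q i =
  (C * (x j.+1 - x j)) * ((q j.+1)^-1 - (q i)^-1) by ring.
apply: mulr_ge0; first apply: mulr_ge0; first exact: ltW.
  rewrite subr_ge0; apply: hxm; lia.
rewrite subr_ge0; apply: (@invq_anti R n q hq1 hq); lia.
Qed.

Lemma D_step_down i j : (1 <= i)%N -> (i <= j)%N -> (j < n)%N ->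
  Fv j.+1 - x j.+1 * C / q i <= Fv j - x j * C / q i.
Proof.
move=> h1 h2 h3; rewrite -subr_ge0.
have -> : Fv j - x j * C / q i - (Fv j.+1 - x j.+1 * C / q i) =
  - ((Fv j.+1 - Fv j) - (x j.+1 - x j) * C / q i) by ring.
rewrite FS; last lia.
have -> : C * (x j.+1 - x j) / q j.+1 - (x j.+1 - x j) * C / q i =
  - ((C * (x j.+1 - x j)) * ((q i)^-1 - (q j.+1)^-1)) by ring.
rewrite opprK.
apply: mulr_ge0; first apply: mulr_ge0; first exact: ltW.
  rewrite subr_ge0; apply: hxm; lia.
rewrite subr_ge0; apply: (@invq_anti R n q hq1 hq); lia.
Qed.

Lemma D_max i j : (1 <= i <= n)%N -> (1 <= j <= n)%N ->
  Fv j - x j * C / q i <= Fv i - x i * C / q i.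
Proof.
move=> hi hj.
have [hji|hij] := leqP j i.
  apply: (@chain_up R (fun k => Fv k - x k * C / q i) 1%N i); last lia.
  move=> k hk; apply: D_step_up; lia.
apply: (@chain_down R (fun k => Fv k - x k * C / q i) i n); last lia.
move=> k hk; apply: D_step_down; lia.
Qed.

Lemma sumF : \sum_(1 <= i < n.+1) Fv i =
  C * (x n / q n +
       \sum_(1 <= i < n) (((n - i)%:R * (1 / q i - 1 / q i.+1) + 1 / q i) * x i)).
Proof.
rewrite (@costE R n q C x hn) /Fv.
under eq_bigr do rewrite mulrDr.
rewrite big_split /= -!mulr_sumr addrC; congr (_ + _).
congr (_ * _); rewrite exch; apply: eq_big_nat => i hi.
ring.
Qed.

Lemma partA : RD_feasible n q C B (opt_reward n q C x) x.
Proof.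
split.
  move=> t t0; rewrite ORE; case: ifP => // /negbT hne.
  have [hJn [/eqP hJ0|[hJ1 _]]] := J_spec t; first by rewrite hJ0 in hne.
  apply: F_ge0; lia.
split.
  move=> i hi; split; first exact: hxb.
  move=> t t0 tq; rewrite /utility fxi // ORE.
  have hqi : 0 < q i by apply: (@qpos R n q hq1 hq).
  have [hJn [hJ0|[hJ1 hJx]]] := J_spec t.
    rewrite hJ0 eqxx sub0r.
    apply: le_trans (_ : 0 <= _).
      by rewrite oppr_le0; apply: mulr_ge0; [apply: mulr_ge0 => //; exact: ltW|rewrite invr_ge0 ltW].
    by rewrite subr_ge0; apply: F_lb.
  have -> : (Jv t == 0%N) = false by apply/eqP; lia.
  apply: le_trans (D_max i (Jv t) hi _); last lia.
  rewrite lerD2l lerN2; apply: ler_wpM2r; first by rewrite invr_ge0 ltW.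
  by apply: ler_wpM2r => //; exact: ltW.
rewrite (eq_big_nat _ _ (F2 := Fv)); first by rewrite sumF.
by move=> i hi; rewrite fxi //; lia.
Qed.

End PartA.
Section PartB.
Variables (R : realType) (n : nat) (q : nat -> R) (C B : R).
Hypothesis hn : (0 < n)%N.
Hypothesis hq1 : 0 < q 1%N.
Hypothesis hq : forall i, (1 <= i < n)%N -> q i <= q i.+1.
Hypothesis hC : 0 < C.
Variables (f : R -> R) (y : nat -> R).
Hypothesis hRD : RD_feasible n q C B f y.

Let hf : reward_fun f. Proof. by case: hRD. Qed.
Let hyb i : (1 <= i <= n)%N -> 0 <= y i /\ y i <= q i.
Proof. by case: hRD => _ [H _] hi; case: (H i hi). Qed.
Let hIC i : (1 <= i <= n)%N ->
  forall t, 0 <= t -> t <= q i -> utility C (q i) f t <= utility C (q i) f (y i).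
Proof. by case: hRD => _ [H _] hi; case: (H i hi). Qed.
Let hbud : \sum_(1 <= i < n.+1) f (y i) <= B.
Proof. by case: hRD => _ []. Qed.

Let qp i : (1 <= i <= n)%N -> 0 < q i.
Proof. exact: (@qpos R n q hq1 hq). Qed.
Let qm i j : (1 <= i)%N -> (i <= j)%N -> (j <= n)%N -> q i <= q j.
Proof. exact: (@qmono R n q hq1 hq i j). Qed.
Let qa i j : (1 <= i)%N -> (i <= j)%N -> (j <= n)%N -> (q j)^-1 <= (q i)^-1.
Proof. exact: (@invq_anti R n q hq1 hq i j). Qed.

Definition vv i := utility C (q i) f (y i).

Lemma V0 i : (1 <= i <= n)%N -> 0 <= vv i.
Proof.
move=> hi; have [y0 yq] := hyb _ hi.
have := hIC _ hi 0 (lexx 0) (le_trans y0 yq); apply: le_trans.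
by rewrite /utility mul0r mul0r subr0; apply: hf.
Qed.

Lemma V1 i j : (1 <= i)%N -> (i <= j)%N -> (j <= n)%N ->
  vv i + C * y i * ((q i)^-1 - (q j)^-1) <= vv j.
Proof.
move=> h1 h2 h3.
have [y0 yq] := hyb i ltac:(lia).
have := hIC j ltac:(lia) (y i) y0 (le_trans yq (qm _ _ h1 h2 h3)).
rewrite /vv /utility; apply: le_trans; apply/eqP; rewrite eq_le; apply/andP.
have -> : f (y i) - y i * C / q i + C * y i * ((q i)^-1 - (q j)^-1) = f (y i) - y i * C / q j by ring.
by rewrite lexx.
Qed.

Lemma ymono i j : (1 <= i)%N -> (i <= j)%N -> (j <= n)%N -> q i < q j -> y i <= y j.
Proof.
move=> h1 h2 h3 hlt.
have [yi0 yiq] := hyb i ltac:(lia).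
have [yj0 yjq] := hyb j ltac:(lia).
have [hle|hgt] := leP (y j) (q i); last by apply: le_trans yiq (ltW hgt).
have A := hIC i ltac:(lia) (y j) yj0 hle.
have Bj := hIC j ltac:(lia) (y i) yi0 (le_trans yiq (qm _ _ h1 h2 h3)).
have e0 : 0 < C * ((q i)^-1 - (q j)^-1).
  have qi := qp i ltac:(lia). have qj := qp j ltac:(lia).
  by apply: mulr_gt0 => //; rewrite subr_gt0 ltf_pV2 ?posrE.
have : 0 <= (y j - y i) * (C * ((q i)^-1 - (q j)^-1)).
  have -> : (y j - y i) * (C * ((q i)^-1 - (q j)^-1)) =
    (utility C (q i) f (y i) - utility C (q i) f (y j)) +
    (utility C (q j) f (y j) - utility C (q j) f (y i)) by rewrite /utility; ring.
  by apply: addr_ge0; rewrite subr_ge0.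
by rewrite pmulr_lge0 // subr_ge0.
Qed.

Fixpoint pm (k : nat) : R := if k is k'.+1 then Num.max (pm k') (y k'.+1) else 0.

Lemma M1 i k : (1 <= i <= k)%N -> y i <= pm k.
Proof.
elim: k => [|k IH] hi; first lia.
rewrite /= le_max; apply/orP.
have [->|hne] := eqVneq i k.+1; first by right.
by left; apply: IH; lia.
Qed.

Lemma M2 k k' : (k <= k')%N -> pm k <= pm k'.
Proof.
elim: k' => [|k' IH] hk; first by have -> : k = 0%N by lia.
have [->|hne] := eqVneq k k'.+1; first exact: lexx.
apply: le_trans (IH _) _; first lia.
by rewrite /= le_max lexx.
Qed.

Lemma M3 k : (1 <= k <= n)%N -> exists i, (1 <= i <= k)%N /\ pm k = y i.
Proof.
elim: k => [|k IH] hk; first lia.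
case: k IH hk => [|k] IH hk.
  exists 1%N; split => //=; rewrite max_r //; by case: (hyb 1 ltac:(lia)).
have [i [hi hpi]] := IH ltac:(lia).
rewrite [pm _]/= -/(pm k.+1) maxEle; case: ifP => _.
  by exists k.+2; split => //; lia.
by exists i; split => //; lia.
Qed.

Definition dd k := (q k)^-1 - (q k.+1)^-1.

Lemma dd_ge0 k : (1 <= k < n)%N -> 0 <= dd k.
Proof. move=> hk; rewrite subr_ge0; apply: qa; lia. Qed.

Lemma VW j : (1 <= j <= n)%N -> C * \sum_(1 <= k < j) pm k * dd k <= vv j.
Proof.
elim/ltn_ind: j => j IH hj.
case: j IH hj => [|[|j]] IH hj; first lia.
  by rewrite big_geq // mulr0; apply: V0.
have [i [hi hpi]] := M3 j.+1 ltac:(lia).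
have IHi := IH i ltac:(lia) ltac:(lia).
apply: le_trans (V1 i j.+2 _ _ _); try lia.
apply: le_trans (lerD IHi (lexx _)).
rewrite (big_cat_nat _ (n:=i)) /=; try lia.
rewrite mulrDr lerD2l -mulrA ler_wpM2l //; first exact: ltW.
have -> : (q i)^-1 - (q j.+2)^-1 = \sum_(i <= k < j.+2) dd k.
  rewrite /dd.
  have := @telescope_sumr _ i j.+2 (fun k => (q k)^-1) ltac:(lia).
  move=> H; rewrite -[RHS]opprK -sumrN.
  under eq_bigr do rewrite opprB.
  by rewrite H opprB.
rewrite mulr_sumr; apply: ler_sum_nat => k hk.
rewrite ler_wpM2r //; first by apply: dd_ge0; lia.
rewrite -hpi; apply: M2; lia.
Qed.

Definition rr : rel nat := fun i j => (q i < q j) || ((q i == q j) && (y i <= y j)).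

Lemma rr_total : total rr.
Proof.
move=> i j; rewrite /rr.
have [h|h|h] := ltgtP (q i) (q j) => //=.
exact: le_total.
Qed.

Lemma rr_trans : transitive rr.
Proof.
move=> j i k; rewrite /rr => /orP[h1|/andP[/eqP e1 h1]] /orP[h2|/andP[/eqP e2 h2]].
- by rewrite (lt_trans h1 h2).
- by rewrite -e2 h1.
- by rewrite e1 h2.
- by rewrite e1 e2 eqxx (le_trans h1 h2) orbT.
Qed.

Lemma rr_refl : reflexive rr.
Proof. by move=> i; rewrite /rr eqxx lexx orbT. Qed.

Definition ss := sort rr (index_iota 1 n.+1).

Lemma ss_perm : perm_eq ss (index_iota 1 n.+1).
Proof. by rewrite /ss perm_sort. Qed.

Lemma ss_size : size ss = n.
Proof. by rewrite /ss size_sort size_iota subn1. Qed.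

Definition sg k := nth 0%N ss k.-1.

Lemma sg_range k : (1 <= k <= n)%N -> (1 <= sg k <= n)%N.
Proof.
move=> hk.
have : sg k \in ss by rewrite /sg mem_nth // ss_size; lia.
by rewrite (perm_mem ss_perm) mem_index_iota; lia.
Qed.

Lemma sg_q k : (1 <= k <= n)%N -> q (sg k) = q k.
Proof.
move=> hk.
have s1 : sorted <=%R (map q ss).
  rewrite sorted_map; apply: sub_sorted (sort_sorted rr_total _).
  by move=> i j /orP[/ltW //|/andP[/eqP e _]]; rewrite /relpre /= e.
have s2 : sorted <=%R (map q (index_iota 1 n.+1)).
  rewrite sorted_map; apply: (@sub_in_sorted _ (fun i => (1 <= i <= n)%N) leq).
  - by move=> i j hi hj hij; apply: qm; lia.
  - by apply/allP => i; rewrite mem_index_iota.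
  - exact: iota_sorted.
have e : map q ss = map q (index_iota 1 n.+1).
  apply: (@sorted_eq _ <=%R le_trans le_anti) => //; exact: perm_map ss_perm.
have := congr1 (fun s => nth 0 s k.-1) e => /=.
rewrite (nth_map 0%N); last by rewrite ss_size; lia.
rewrite (nth_map 0%N); last by rewrite size_iota; lia.
by rewrite nth_iota; [have -> : (1 + k.-1)%N = k by lia|lia].
Qed.

Lemma sum_sg (G : nat -> R) :
  \sum_(1 <= k < n.+1) G (sg k) = \sum_(1 <= i < n.+1) G i.
Proof.
rewrite big_add1 /= -[RHS](perm_big _ ss_perm) /= [RHS](big_nth 0%N) ss_size.
by [].
Qed.

Definition zz k := y (sg k).

Lemma zz_mono k : (1 <= k < n)%N -> zz k <= zz k.+1.
Proof.
move=> hk.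
have : rr (sg k) (sg k.+1).
  apply: (sorted_leq_nth rr_trans rr_refl 0%N (sort_sorted rr_total _)); rewrite ?inE ?ss_size /=; lia.
have h1 := sg_range k ltac:(lia).
have h2 := sg_range k.+1 ltac:(lia).
rewrite /rr /zz => /orP[hlt|/andP[_ h]] //.
apply: ymono => //; try lia.
have [//|hle] := leqP (sg k) (sg k.+1).
have := qm (sg k.+1) (sg k) ltac:(lia) ltac:(lia) ltac:(lia).
by rewrite leNgt hlt.
Qed.

Lemma zz_dd k : (1 <= k < n)%N -> zz k * dd k <= pm k * dd k.
Proof.
move=> hk.
have hr := sg_range k ltac:(lia).
have [hle|hgt] := leqP (sg k) k.
  rewrite ler_wpM2r //; first by apply: dd_ge0.
  apply: M1; lia.
have e : q k.+1 = q k.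
  apply/eqP; rewrite eq_le hq //= -(sg_q k) ?qm //; lia.
by rewrite /dd e subrr !mulr0.
Qed.

Lemma partB : LP_feasible n q C B zz /\ sum_quality n zz = sum_quality n y.
Proof.
have zb : forall k, (1 <= k <= n)%N -> 0 <= zz k /\ zz k <= q k.
  move=> k hk; rewrite /zz -(sg_q k hk); apply: hyb; exact: sg_range.
split; last by rewrite /sum_quality sum_sg.
split; first exact: zb.
split; first by case: (zb 1%N ltac:(lia)).
split; first exact: zz_mono.
rewrite (@costE R n q C zz hn).
apply: le_trans hbud.
have -> : \sum_(1 <= i < n.+1) f (y i) =
   \sum_(1 <= i < n.+1) vv i + C * \sum_(1 <= i < n.+1) y i / q i.
  rewrite mulr_sumr -big_split /=; apply: eq_bigr => i _; rewrite /vv /utility; ring.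
rewrite [X in _ <= X]addrC; apply: lerD.
  have -> : \sum_(1 <= i < n.+1) zz i / q i = \sum_(1 <= i < n.+1) y i / q i.
    transitivity (\sum_(1 <= k < n.+1) y (sg k) / q (sg k)); last exact: (sum_sg (fun i => y i / q i)).
    by apply: eq_big_nat => k hk; rewrite /zz sg_q.
  exact: lexx.
apply: le_trans (_ : C * \sum_(1 <= k < n) (n - k)%:R * (pm k * dd k) <= _).
  rewrite ler_wpM2l //; first exact: ltW.
  apply: ler_sum_nat => k hk; apply: ler_wpM2l; [exact: ler0n|exact: zz_dd].
apply: le_trans (_ : \sum_(1 <= j < n.+1) C * \sum_(1 <= k < j) pm k * dd k <= _).
  by rewrite -mulr_sumr exch.
by apply: ler_sum_nat => j hj; apply: VW.
Qed.

End PartB.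
Local Open Scope classical_set_scope.
Section Topo.
Variables (R : realType) (m : nat).
Lemma cont_sum (F : nat -> 'rV[R]_m -> R) (r : seq nat) :
  (forall i, continuous (F i)) -> continuous (fun v => \sum_(i <- r) F i v).
Proof.
move=> H; elim: r => [|a r IH].
  have -> : (fun v : 'rV[R]_m => \sum_(i <- [::]) F i v) = (fun=> 0).
    by apply: funext => v; rewrite big_nil.
  exact: cst_continuous.
have -> : (fun v => \sum_(i <- a :: r) F i v) = (fun v => F a v + \sum_(i <- r) F i v).
  by apply: funext => v; rewrite big_cons.
move=> v; apply: continuousD; [exact: H|exact: IH].
Qed.

Lemma cont_scale (c : R) (g : 'rV[R]_m -> R) : continuous g -> continuous (fun v => c * g v).
Proof. move=> H v; apply: continuousM; [exact: cst_continuous|exact: H]. Qed.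

Lemma cont_mulr (c : R) (g : 'rV[R]_m -> R) : continuous g -> continuous (fun v => g v * c).
Proof. move=> H v; apply: continuousM; [exact: H|exact: cst_continuous]. Qed.

Lemma cont_add (g h : 'rV[R]_m -> R) : continuous g -> continuous h -> continuous (fun v => g v + h v).
Proof. move=> H1 H2 v; apply: continuousD; [exact: H1|exact: H2]. Qed.

Lemma closed_le_fun (g h : 'rV[R]_m -> R) : continuous g -> continuous h ->
  closed [set v | g v <= h v].
Proof.
move=> cg ch.
have -> : [set v | g v <= h v] = (fun v => h v - g v) @^-1` [set x | 0 <= x].
  by apply/seteqP; split => v /=; rewrite subr_ge0.
apply: preimage_closed; last exact: closed_ge.
move=> v _; apply: continuousB; [exact: ch|exact: cg].
Qed.
End Topo.

Section PartC.
Variables (R : realType) (n : nat) (q : nat -> R) (C B : R).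
Hypothesis hn : (0 < n)%N.
Hypothesis hq1 : 0 < q 1%N.
Hypothesis hq : forall i, (1 <= i < n)%N -> q i <= q i.+1.
Hypothesis hC : 0 < C.
Hypothesis hB : 0 < B.

Lemma LP_ext (a b : nat -> R) : (forall k, (1 <= k <= n)%N -> a k = b k) ->
  LP_feasible n q C B a -> LP_feasible n q C B b.
Proof.
move=> e [h1 [h2 [h3 h4]]]; split; [|split; [|split]].
- by move=> i hi; rewrite -e //; exact: h1.
- by rewrite -e //; lia.
- move=> i hi; have h := h3 i hi.
  rewrite (e i) in h; last lia.
  rewrite (e i.+1) in h; last lia.
  exact: h.
- have -> : \sum_(1 <= i < n) (((n - i)%:R * (1 / q i - 1 / q i.+1) + 1 / q i) * b i)
    = \sum_(1 <= i < n) (((n - i)%:R * (1 / q i - 1 / q i.+1) + 1 / q i) * a i).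
    by apply: eq_big_nat => i hi; rewrite e //; lia.
  by rewrite -(e n) //; lia.
Qed.

Lemma sq_ext (a b : nat -> R) : (forall k, (1 <= k <= n)%N -> a k = b k) ->
  sum_quality n a = sum_quality n b.
Proof. by move=> e; apply: eq_big_nat => i hi; apply: e. Qed.

Definition toF (v : 'rV[R]_n.+1) : nat -> R :=
  fun k => if (1 <= k <= n)%N then v ord0 (inord k) else 0.

Lemma toF_cont k : continuous (fun v => toF v k).
Proof.
have [h|h] := boolP ((1 <= k <= n)%N).
  have -> : (fun v : 'rV[R]_n.+1 => toF v k) = (fun v => v ord0 (inord k)).
    by apply: funext => v; rewrite /toF h.
  exact: coord_continuous.
have -> : (fun v : 'rV[R]_n.+1 => toF v k) = (fun=> 0).
  by apply: funext => v; rewrite /toF (negbTE h).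
exact: cst_continuous.
Qed.

Definition cvec := fun i => ((n - i)%:R * (1 / q i - 1 / q i.+1) + 1 / q i).

Definition Sset := [set v : 'rV[R]_n.+1 | LP_feasible n q C B (toF v) /\ v ord0 ord0 = 0].

Lemma Sset_closed : closed Sset.
Proof.
have -> : Sset =
  (\bigcap_(i in [set i | (1 <= i <= n)%N])
     ([set v | 0 <= toF v i] `&` [set v | toF v i <= q i])
  `&` ([set v | 0 <= toF v 1%N]
  `&` (\bigcap_(i in [set i | (1 <= i < n)%N]) [set v | toF v i <= toF v i.+1]
  `&` [set v | C * (toF v n / q n + \sum_(1 <= i < n) cvec i * toF v i) <= B])))
  `&` ([set v | v ord0 ord0 <= 0] `&` [set v | 0 <= v ord0 ord0]).
  apply/seteqP; split => v /=.
    move=> [[h1 [h2 [h3 h4]]] h5]; split; last by rewrite h5 lexx.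
    split; first by move=> i /h1.
    by split => //; split.
  move=> [[h1 [h2 [h3 h4]]] [h5 h6]]; split; last by apply/eqP; rewrite eq_le h5 h6.
  split; first by move=> i /h1.
  by split => //; split.
apply: closedI; last apply: closedI.
- apply: closedI.
    apply: closed_bigI => i _; apply: closedI; apply: closed_le_fun;
      (exact: toF_cont || exact: cst_continuous).
  apply: closedI.
    apply: closed_le_fun; [exact: cst_continuous|exact: toF_cont].
  apply: closedI.
    apply: closed_bigI => i _; apply: closed_le_fun; exact: toF_cont.
  apply: closed_le_fun; last exact: cst_continuous.
  apply: cont_scale; apply: cont_add.
    exact: (@cont_mulr R n.+1 (q n)^-1 (fun v => toF v n) (toF_cont n)).
  apply: cont_sum => i; exact: (@cont_scale R n.+1 (cvec i) (fun v => toF v i) (toF_cont i)).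
- apply: closed_le_fun; [exact: coord_continuous|exact: cst_continuous].
- apply: closed_le_fun; [exact: cst_continuous|exact: coord_continuous].
Qed.

Definition qq (i : 'I_n.+1) : R := if (1 <= i)%N then q i else 0.

Lemma Sset_compact : compact Sset.
Proof.
have K := @rV_compact R n.+1 (fun i => `[0, qq i]%classic) (fun i => @segment_compact R _ _).
apply: (subclosed_compact Sset_closed K).
move=> v [hv h0] i /=; rewrite in_itv /= /qq.
case: (posnP i) => [i0|ip].
  have -> : i = ord0 by apply/val_inj.
  by rewrite h0 lexx.
have hi : (1 <= i <= n)%N by have := ltn_ord i; lia.
case: hv => hb _; have := hb i hi; rewrite /toF hi inord_val => -[a b].
by rewrite a b.
Qed.

Lemma LP_zero : LP_feasible n q C B (fun=> 0).
Proof.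
split; [|split; [|split]].
- move=> i hi; split => //; apply: ltW; exact: (@qpos R n q hq1 hq).
- exact: lexx.
- by move=> *; exact: lexx.
- rewrite big1; last by move=> i _; rewrite mulr0.
  by rewrite mul0r addr0 mulr0; exact: ltW.
Qed.

Lemma LP_exists : exists x, LP_optimal n q C B x.
Proof.
have S0 : Sset !=set0.
  exists 0; split; last by rewrite mxE.
  apply: LP_ext LP_zero => k hk; by rewrite /toF hk mxE.
have cf : {within Sset, continuous (fun v => sum_quality n (toF v))}.
  apply: continuous_subspaceT; rewrite /sum_quality.
  exact: (@cont_sum R n.+1 (fun i v => toF v i) (index_iota 1 n.+1) toF_cont).
have [c /set_mem [hc _] cmax] := compact_EVT_max S0 Sset_compact cf.
exists (toF c); split => // y hy.
pose v : 'rV[R]_n.+1 := \row_(i < n.+1) (if (1 <= i)%N then y i else 0).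
have ev : forall k, (1 <= k <= n)%N -> y k = toF v k.
  move=> k hk; rewrite /toF hk mxE inordK; last lia.
  by have -> : (1 <= k)%N by lia.
have vS : v \in Sset.
  apply: mem_set; split; first exact: (LP_ext _ _ ev hy).
  by rewrite mxE.
by rewrite (sq_ext _ _ ev); apply: cmax.
Qed.

End PartC.

Theorem theorem2 (R : realType) (n : nat) (q : nat -> R) (C B : R)
  (hn : (0 < n)%N)
  (hq1 : 0 < q 1%N)
  (hq : forall i, (1 <= i < n)%N -> q i <= q i.+1)
  (hC : 0 < C) (hB : 0 < B) :
  (exists x : nat -> R, LP_optimal n q C B x) /\
  (forall x : nat -> R, LP_optimal n q C B x ->
     RD_feasible n q C B (opt_reward n q C x) x /\
     (forall (f : R -> R) (y : nat -> R),
        RD_feasible n q C B f y -> sum_quality n y <= sum_quality n x)).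
Proof.
split; first exact: (@LP_exists R n q C B hn hq1 hq hC hB).
move=> x [hx hopt]; split.
  exact: (@partA R n q C B hn hq1 hq hC x hx).
move=> f y hRD.
have [hz hs] := @partB R n q C B hn hq1 hq hC f y hRD.
by rewrite -hs; apply: hopt.
Qed.
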